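(* Let $\Sigma\subseteq\mathcal L_\Diamond$ be finite and closed under subformulas and let $\mathcal I$ be a finite weak $\Sigma$-quasimodel such that for every deterministic weak $\mathcal L_\Diamond$-quasimodel $\mathcal A$ the relation $\rightharpoonup\ \subseteq|\mathcal I|\times|\mathcal A|$ is a surjective dynamic simulation. Let $P=\{w\in|\mathcal I|:\not\vdash\mathrm{Sim}(w)\}$, and for $w\in P$ let $R(w)$ be the set of $v\in P$ for which there is a finite sequence $u_0,\dots,u_n$ of elements of $P$ with $u_0=w$, $u_n=v$ and $u_i\,S_{\mathcal I}\,u_{i+1}$ for all $i<n$. Then for every $w\in P$, $$\vdash\ \bigcirc\bigwedge_{v\in R(w)}\mathrm{Sim}(v)\ \to\ \bigwedge_{v\in R(w)}\mathrm{Sim}(v).$$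
   Context: $\mathcal L_\Diamond$ is the propositional language with $\bot,\wedge,\vee,\to$ and unary modalities $\bigcirc$, $\Diamond$. ${\sf ITL}^0_\Diamond$ is axiomatized by all intuitionistic propositional tautologies, $\neg\bigcirc\bot$, $\bigcirc\varphi\wedge\bigcirc\psi\to\bigcirc(\varphi\wedge\psi)$, $\bigcirc(\varphi\vee\psi)\to\bigcirc\varphi\vee\bigcirc\psi$, $\bigcirc(\varphi\to\psi)\to(\bigcirc\varphi\to\bigcirc\psi)$, $\varphi\vee\bigcirc\Diamond\varphi\to\Diamond\varphi$, closed under modus ponens and the rules $\varphi/\bigcirc\varphi$, $(\varphi\to\psi)/(\Diamond\varphi\to\Diamond\psi)$, $(\bigcirc\varphi\to\varphi)/(\Diamond\varphi\to\varphi)$; $\vdash\varphi$ means $\varphi\in{\sf ITL}^0_\Diamond$. Types: a $\Sigma$-type is a pair $\Phi=(\Phi^-;\Phi^+)$ of subsets of $\Sigma$ with $\Phi^-\cap\Phi^+=\varnothing$, $\Phi^-\cup\Phi^+=\Sigma$, $\bot\notin\Phi^+$, $\wedge,\vee$ in $\Phi^+$ behaving classically, ($\varphi\to\psi\in\Phi^+\Rightarrow\varphi\in\Phi^-$ or $\psi\in\Phi^+$), ($\Diamond\varphi\in\Phi^-\Rightarrow\varphi\in\Phi^-$). $\Phi\preccurlyeq_T\Psi$ iff $\Phi^+\subseteq\Psi^+$; $\Phi\subseteq_T\Psi$ iff $\Phi^-\subseteq\Psi^-$, $\Phi^+\subseteq\Psi^+$. $\Phi\,S_T\,\Psi$ iff: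 $\bigcirc\varphi\in\Phi^+\Rightarrow\varphi\in\Psi^+$; $\bigcirc\varphi\in\Phi^-\Rightarrow\varphi\in\Psi^-$; ($\Diamond\varphi\in\Phi^+$, $\varphi\in\Phi^-$)$\Rightarrow\Diamond\varphi\in\Psi^+$; $\Diamond\varphi\in\Phi^-\Rightarrow\Diamond\varphi\in\Psi^-$. A $\Sigma$-labelled frame is $(W,\preccurlyeq,\ell)$, $\preccurlyeq$ a partial order, $\ell$ mapping to $\Sigma$-types, monotone w.r.t. $\preccurlyeq_T$, and if $\varphi\to\psi\in\ell^-(w)$ then some $v\succcurlyeq w$ has $\varphi\in\ell^+(v)$, $\psi\in\ell^-(v)$. A weak $\Sigma$-quasimodel adds $S\subseteq W\times W$ forward-confluent and sensible ($w\,S\,v\Rightarrow\ell(w)\,S_T\,\ell(v)$); deterministic if $S$ is a function. A simulation from a $\Sigma$-labelled $\mathcal X$ to a $\Delta$-labelled $\mathcal Y$ ($\Sigma\subseteq\Delta$) is a forward-confluent $E\subseteq|\mathcal X|\times|\mathcal Y|$ (if $x\,E\,y$, $x\preccurlyeq x'$ then some $y'\succcurlyeq y$ has $x'\,E\,y'$) with $x\,E\,y\Rightarrow\ell(x)\subseteq_T\ell(y)$; $x\rightharpoonup y$ iff some simulation relates them; $E$ is dynamic if $x\,E\,y$ and $y\,S\,y'$ imply some $x'$ with $x\,S\,x'$, $x'\,E\,y'$; surjective if every point of $\mathcal A$ is in its range. $\mathrm{Sim}(w)=\bigwedge\ell^+(w)\to\big(\bigvee\ell^-(w)\vee\bigvee_{v\succ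 w}\mathrm{Sim}(v)\big)$, defined by backwards induction on $\prec$ ($\bigwedge\varnothing=\top$, $\bigvee\varnothing=\bot$). *)

(* Defs.v *)
From Stdlib Require List.
From mathcomp Require Import all_boot.
Set Implicit Arguments.
Unset Strict Implicit.
Unset Printing Implicit Defensive.

Inductive form : Type :=
| Var  : nat -> form
| Bot  : form
| And  : form -> form -> form
| Or   : form -> form -> form
| Imp  : form -> form -> form
| Next : form -> form
| Dia  : form -> form.

Definition Neg (a : form) : form := Imp a Bot.
Definition Top : form := Imp Bot Bot.

Fixpoint bigAnd (l : seq form) : form :=
  match l with
  | [::] => Top
  | [:: a] => a
  | a :: l' => And a (bigAnd l')
  end.
Fixpoint bigOr (l : seq form) : form :=
  match l with
  | [::] => Bot
  | [:: a] => a
  | a :: l' => Or a (bigOr l')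
  end.

Inductive subform : form -> form -> Prop :=
| sf_refl a : subform a a
| sf_andl a b c : subform c a -> subform c (And a b)
| sf_andr a b c : subform c b -> subform c (And a b)
| sf_orl a b c : subform c a -> subform c (Or a b)
| sf_orr a b c : subform c b -> subform c (Or a b)
| sf_impl a b c : subform c a -> subform c (Imp a b)
| sf_impr a b c : subform c b -> subform c (Imp a b)
| sf_next a c : subform c a -> subform c (Next a)
| sf_dia a c : subform c a -> subform c (Dia a).

(* The logic ITL^0_Diamond.  All intuitionistic propositional           *)
(* tautologies are generated by a standard complete Hilbert           *)
(* axiomatisation of IPC (instances over the whole language L_Diamond) *)
(* together with modus ponens.                                         *)
Inductive prov : form -> Prop :=
| ax_K a b : prov (Imp a (Imp b a))
| ax_S a b c : prov (Imp (Imp a (Imp b c)) (Imp (Imp a b) (Imp a c)))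
| ax_andI a b : prov (Imp a (Imp b (And a b)))
| ax_andE1 a b : prov (Imp (And a b) a)
| ax_andE2 a b : prov (Imp (And a b) b)
| ax_orI1 a b : prov (Imp a (Or a b))
| ax_orI2 a b : prov (Imp b (Or a b))
| ax_orE a b c : prov (Imp (Imp a c) (Imp (Imp b c) (Imp (Or a b) c)))
| ax_efq a : prov (Imp Bot a)
| ax_nextBot : prov (Neg (Next Bot))
| ax_nextAnd a b : prov (Imp (And (Next a) (Next b)) (Next (And a b)))
| ax_nextOr a b : prov (Imp (Next (Or a b)) (Or (Next a) (Next b)))
| ax_nextK a b : prov (Imp (Next (Imp a b)) (Imp (Next a) (Next b)))
| ax_diaFix a : prov (Imp (Or a (Next (Dia a))) (Dia a))
| r_mp a b : prov (Imp a b) -> prov a -> prov b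
| r_nec a : prov a -> prov (Next a)
| r_diaMono a b : prov (Imp a b) -> prov (Imp (Dia a) (Dia b))
| r_diaInd a : prov (Imp (Next a) a) -> prov (Imp (Dia a) a).

Definition is_type (Sig neg pos : form -> Prop) : Prop :=
  (forall a, neg a -> Sig a) /\
  (forall a, pos a -> Sig a) /\
  (forall a, ~ (neg a /\ pos a)) /\
  (forall a, Sig a -> neg a \/ pos a) /\
  ~ pos Bot /\
  (forall a b, Sig (And a b) -> (pos (And a b) <-> pos a /\ pos b)) /\
  (forall a b, Sig (Or a b) -> (pos (Or a b) <-> pos a \/ pos b)) /\
  (forall a b, pos (Imp a b) -> neg a \/ pos b) /\
  (forall a, neg (Dia a) -> neg a).

Definition typeS (neg1 pos1 neg2 pos2 : form -> Prop) : Prop :=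
  [/\ (forall a, pos1 (Next a) -> pos2 a),
      (forall a, neg1 (Next a) -> neg2 a),
      (forall a, pos1 (Dia a) -> neg1 a -> pos2 (Dia a))
    & (forall a, neg1 (Dia a) -> neg2 (Dia a))].

(* A (possibly infinite) frame with a dynamic relation and labels.
   fneg w / fpos w are the two components of the label l(w). *)
Record lframe := LFrame {
  pt : Type;
  fle : pt -> pt -> Prop;
  fS : pt -> pt -> Prop;
  fneg : pt -> form -> Prop;
  fpos : pt -> form -> Prop }.

Definition labelled_frame (Sig : form -> Prop) (F : lframe) : Prop :=
  (forall w : pt F, fle w w) /\
  (forall u v w : pt F, fle u v -> fle v w -> fle u w) /\
  (forall u v : pt F, fle u v -> fle v u -> u = v) /\
  (forall w : pt F, is_type Sig (fneg w) (fpos w)) /\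
  (forall (w v : pt F) a, fle w v -> fpos w a -> fpos v a) /\
  (forall (w : pt F) a b, fneg w (Imp a b) ->
     exists v, [/\ fle w v, fpos v a & fneg v b]).

Definition forward_confluent (F : lframe) : Prop :=
  forall w w' v : pt F, fle w w' -> fS w v -> exists v', fle v v' /\ fS w' v'.

Definition sensible (F : lframe) : Prop :=
  forall w v : pt F, fS w v -> typeS (fneg w) (fpos w) (fneg v) (fpos v).

Definition weak_quasimodel (Sig : form -> Prop) (F : lframe) : Prop :=
  [/\ labelled_frame Sig F, forward_confluent F & sensible F].

Definition deterministic (F : lframe) : Prop :=
  forall w : pt F, exists! v, fS w v.

Definition simulation (X Y : lframe) (E : pt X -> pt Y -> Prop) : Prop :=
  (forall x y x', E x y -> fle x x' -> exists y', fle y y' /\ E x' y') /\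
  (forall x y, E x y ->
     (forall a, fneg x a -> fneg y a) /\ (forall a, fpos x a -> fpos y a)).

Definition simulates (X Y : lframe) (x : pt X) (y : pt Y) : Prop :=
  exists E, simulation E /\ E x y.

Definition dynamic (X Y : lframe) (E : pt X -> pt Y -> Prop) : Prop :=
  forall x y y', E x y -> fS y y' -> exists x', fS x x' /\ E x' y'.

Definition surjective (X Y : lframe) (E : pt X -> pt Y -> Prop) : Prop :=
  forall y, exists x, E x y.

(* finite Sigma given as a list; label of w is                          *)
(*   l^+(w) = {a in Sigma | lpos w a},  l^-(w) = {a in Sigma | ~~ lpos w a} *)
Definition inSig (Sig : seq form) : form -> Prop := fun a => List.In a Sig.

Definition sub_closed (Sig : seq form) : Prop :=
  forall a b, List.In a Sig -> subform b a -> List.In b Sig.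

Definition finframe (Sig : seq form) (T : finType) (le S : rel T)
  (lpos : T -> pred form) : lframe :=
  @LFrame T (fun x y => le x y) (fun x y => S x y)
    (fun w a => List.In a Sig /\ ~~ lpos w a)
    (fun w a => List.In a Sig /\ lpos w a).

(* Sim(w), by backwards induction on the strict order; implemented with
   fuel #|T|, which exceeds the length of every strict chain, so
   Sim_fuel #|T| w is exactly the formula Sim(w) of the paper. *)
Fixpoint Sim_fuel (Sig : seq form) (T : finType) (le : rel T)
  (lpos : T -> pred form) (k : nat) (w : T) : form :=
  match k with
  | 0 => Bot
  | k'.+1 =>
    Imp (bigAnd [seq a <- Sig | lpos w a])
        (Or (bigOr [seq a <- Sig | ~~ lpos w a])
            (bigOr [seq Sim_fuel Sig le lpos k' v
                   | v <- enum T & le w v && (v != w)]))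
  end.

Definition Sim (Sig : seq form) (T : finType) (le : rel T)
  (lpos : T -> pred form) (w : T) : form :=
  Sim_fuel Sig le lpos #|T| w.

Inductive reachP (T : Type) (P : T -> Prop) (S : T -> T -> Prop) : T -> T -> Prop :=
| rp_refl w : P w -> reachP P S w w
| rp_step w u v : P w -> S w u -> reachP P S u v -> reachP P S w v.

(* Main.v *)
Require Import Defs.
From mathcomp Require Import all_boot.
From Stdlib Require Import Classical FunctionalExtensionality PropExtensionality ProofIrrelevance.
Set Implicit Arguments. Unset Strict Implicit. Unset Printing Implicit Defensive.

Inductive Der (G : form -> Prop) : form -> Prop :=
| d_hyp a : G a -> Der G a
| d_ax a : prov a -> Der G a
| d_mp a b : Der G (Imp a b) -> Der G a -> Der G b.

Lemma prov_id a : prov (Imp a a).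
Proof. exact: r_mp (r_mp (ax_S a (Imp a a) a) (ax_K a (Imp a a))) (ax_K a a). Qed.

Definition add (G : form -> Prop) a := fun x => G x \/ x = a.

Lemma deduction G a b : Der (add G a) b -> Der G (Imp a b).
Proof.
elim=> [x [Gx|->]|x px|x y _ IH1 _ IH2].
- exact: d_mp (d_ax _ (ax_K x a)) (d_hyp Gx).
- exact: d_ax _ (prov_id a).
- exact: d_mp (d_ax _ (ax_K x a)) (d_ax _ px).
- exact: d_mp (d_mp (d_ax _ (ax_S a x y)) IH1) IH2.
Qed.

Lemma der_mono (G G' : form -> Prop) b : (forall x, G x -> G' x) -> Der G b -> Der G' b.
Proof.
move=> sub; elim=> [x /sub|x px|x y _ IH1 _ IH2]; first exact: d_hyp.
- exact: d_ax.
- exact: d_mp IH1 IH2.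
Qed.

Lemma der_prov b : Der (fun _ => False) b -> prov b.
Proof. elim=> [x []|x px|x y _ IH1 _ IH2] //; exact: r_mp IH1 IH2. Qed.

Lemma prov_of a b : Der (add (fun _ => False) a) b -> prov (Imp a b).
Proof. by move=> H; apply: der_prov; apply: deduction. Qed.

Lemma hypA (G : form -> Prop) a : Der (add G a) a.
Proof. by apply: d_hyp; right. Qed.

Fixpoint enc (f : form) : GenTree.tree nat :=
  match f with
  | Var n => GenTree.Leaf n
  | Bot => GenTree.Node 0 [::]
  | And a b => GenTree.Node 1 [:: enc a; enc b]
  | Or a b => GenTree.Node 2 [:: enc a; enc b]
  | Imp a b => GenTree.Node 3 [:: enc a; enc b]
  | Next a => GenTree.Node 4 [:: enc a]
  | Dia a => GenTree.Node 5 [:: enc a]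
  end.

Fixpoint dec (t : GenTree.tree nat) : form :=
  match t with
  | GenTree.Leaf n => Var n
  | GenTree.Node 1 [:: a; b] => And (dec a) (dec b)
  | GenTree.Node 2 [:: a; b] => Or (dec a) (dec b)
  | GenTree.Node 3 [:: a; b] => Imp (dec a) (dec b)
  | GenTree.Node 4 [:: a] => Next (dec a)
  | GenTree.Node 5 [:: a] => Dia (dec a)
  | _ => Bot
  end.

Lemma encK f : dec (enc f) = f.
Proof. by elim: f => //= [a -> b ->|a -> b ->|a -> b ->|a ->|a ->]. Qed.

Definition enum_f (n : nat) : form :=
  match unpickle n with Some t => dec t | None => Bot end.

Lemma enum_f_surj f : enum_f (pickle (enc f)) = f.
Proof. by rewrite /enum_f pickleK encK. Qed.

Definition primeT (G : form -> Prop) :=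
  [/\ forall a, Der G a -> G a, ~ G Bot & forall a b, G (Or a b) -> G a \/ G b].

Section Lind.
Variables (G : form -> Prop) (b : form).

Fixpoint chain (n : nat) : form -> Prop :=
  match n with
  | 0 => G
  | n'.+1 => fun x => chain n' x \/ (x = enum_f n' /\ ~ Der (add (chain n') (enum_f n')) b)
  end.

Lemma chain_mono n m x : n <= m -> chain n x -> chain m x.
Proof.
elim: m => [|m IH]; first by rewrite leqn0 => /eqP ->.
rewrite leq_eqVlt => /orP [/eqP -> //|lt] cx /=; left; exact: IH.
Qed.

Lemma chain_noder n : ~ Der G b -> ~ Der (chain n) b.
Proof.
move=> H0; elim: n => [|n IH] //= D.
case: (classic (Der (add (chain n) (enum_f n)) b)) => D'.
- apply: IH; apply: der_mono D => x [//|[_ //]].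
- apply: D'; apply: der_mono D => x [|[->]]; [by left|by right].
Qed.

Definition limit x := exists n, chain n x.

Lemma compact a : Der limit a -> exists n, Der (chain n) a.
Proof.
elim=> [x [n cx]|x px|x y _ [n1 D1] _ [n2 D2]].
- by exists n; apply: d_hyp.
- by exists 0; apply: d_ax.
- exists (maxn n1 n2); apply: d_mp.
  + apply: der_mono D1 => z; apply: chain_mono; exact: leq_maxl.
  + apply: der_mono D2 => z; apply: chain_mono; exact: leq_maxr.
Qed.

Lemma lindenbaum : ~ Der G b ->
  [/\ primeT limit, forall x, G x -> limit x & ~ limit b].
Proof.
move=> H0.
have nolim : ~ Der limit b by move=> /compact [n]; exact: chain_noder.
have maxi : forall x, ~ Der (add limit x) b -> limit x.
  move=> x nd; exists (pickle (enc x)).+1 => /=; right; split; first by rewrite enum_f_surj.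
  rewrite enum_f_surj => D; apply: nd; apply: der_mono D => z [cz|->]; last by right.
  by left; exists (pickle (enc x)).
have clo : forall a, Der limit a -> limit a.
  move=> a Da; apply: maxi => Db; apply: nolim; exact: d_mp (deduction Db) Da.
split.
- split => //.
  + move=> /(@d_hyp limit _) Dbot; apply: nolim; exact: d_mp (d_ax _ (ax_efq b)) Dbot.
  + move=> x y Hxy; apply: NNPP => /not_or_and [nx ny]; apply: nolim.
    have Dx : Der (add limit x) b by apply: NNPP => /maxi.
    have Dy : Der (add limit y) b by apply: NNPP => /maxi.
    apply: d_mp (d_hyp Hxy).
    exact: d_mp (d_mp (d_ax _ (ax_orE x y b)) (deduction Dx)) (deduction Dy).
- by move=> x Gx; exists 0.
- by move=> /(@d_hyp limit _).
Qed.
End Lind.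

Section PrimeFacts.
Variable G : form -> Prop.
Hypothesis pG : primeT G.

Lemma pr_der a : Der G a -> G a.
Proof. by case: pG => h _ _; apply: h. Qed.
Lemma pr_ax a : prov a -> G a.
Proof. by move=> p; apply: pr_der; apply: d_ax. Qed.
Lemma pr_mp a b : G (Imp a b) -> G a -> G b.
Proof. by move=> h1 h2; apply: pr_der; apply: (d_mp (d_hyp h1) (d_hyp h2)). Qed.
Lemma pr_imp a b : prov (Imp a b) -> G a -> G b.
Proof. by move=> p; apply: pr_mp; apply: pr_ax. Qed.
Lemma pr_bot : ~ G Bot.
Proof. by case: pG. Qed.
Lemma pr_and a b : G (And a b) <-> G a /\ G b.
Proof.
split; first by move=> h; split; [apply: pr_imp (ax_andE1 a b) h|apply: pr_imp (ax_andE2 a b) h].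
by case=> h1 h2; apply: pr_mp (pr_imp (ax_andI a b) h1) h2.
Qed.
Lemma pr_or a b : G (Or a b) <-> G a \/ G b.
Proof.
split; first by case: pG => _ _; apply.
by case=> h; [apply: pr_imp (ax_orI1 a b) h|apply: pr_imp (ax_orI2 a b) h].
Qed.
Lemma pr_top : G Top.
Proof. exact: pr_ax (prov_id Bot). Qed.

Lemma pr_bigAnd l : G (bigAnd l) <-> forall x, List.In x l -> G x.
Proof.
elim: l => [|a l IH]; first by split=> // _; apply: pr_top.
case: l IH => [|b l] IH /=.
  by split; [move=> h x [<-|[]]|move=> h; apply: h; left].
rewrite pr_and IH; split.
- by case=> ha hl x [<-|hx] //; apply: hl.
- by move=> h; split; [apply: h; left|move=> x hx; apply: h; right].
Qed.

Lemma pr_bigOr l : G (bigOr l) <-> exists x, List.In x l /\ G x.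
Proof.
elim: l => [|a l IH]; first by split=> [/pr_bot []|[x [[]]]].
case: l IH => [|b l] IH /=.
  by split; [move=> h; exists a; split=> //; left|case=> x [[<-|[]]]].
rewrite pr_or IH; split.
- by case=> [ha|[x [hx gx]]]; [exists a; split=> //; left|exists x; split=> //; right].
- by case=> x [[<-|hx] gx]; [left|right; exists x].
Qed.
End PrimeFacts.

Definition succ (G : form -> Prop) := fun a => G (Next a).

Lemma succ_prime G : primeT G -> primeT (succ G).
Proof.
move=> pG; split.
- move=> a; elim=> [x //|x px|x y _ IH1 _ IH2].
  + by rewrite /succ; apply: (pr_ax pG); apply: r_nec.
  + rewrite /succ in IH1 IH2 *; exact (pr_mp pG (pr_imp pG (ax_nextK x y) IH1) IH2).
- by move=> h; apply: (pr_bot pG); exact (pr_mp pG (pr_ax pG ax_nextBot) h).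
- by move=> a b h; apply/(pr_or pG); exact (pr_imp pG (ax_nextOr a b) h).
Qed.

Definition Pt := {G : form -> Prop | primeT G}.

Definition CF : lframe :=
  @LFrame Pt (fun G H => forall a, sval G a -> sval H a)
    (fun G H => forall a, sval G (Next a) <-> sval H a)
    (fun G a => ~ sval G a) (fun G a => sval G a).

Lemma Pt_eq (G H : Pt) : (forall a, sval G a <-> sval H a) -> G = H.
Proof.
case: G H => [g pg] [h ph] /= e.
have E : g = h by apply: functional_extensionality => a; apply: propositional_extensionality.
subst h; f_equal; apply: proof_irrelevance.
Qed.

Lemma prov_dia a : prov (Imp a (Dia a)).
Proof. apply: prov_of; apply: (d_mp (d_ax _ (ax_diaFix a))); apply: d_mp (d_ax _ (ax_orI1 _ _)) (hypA _ _). Qed.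

Lemma prov_ndia a : prov (Imp (Next (Dia a)) (Dia a)).
Proof. apply: prov_of; apply: (d_mp (d_ax _ (ax_diaFix a))); apply: d_mp (d_ax _ (ax_orI2 _ _)) (hypA _ _). Qed.

Lemma nextmono a b : prov (Imp a b) -> prov (Imp (Next a) (Next b)).
Proof. by move=> p; apply: r_mp (ax_nextK a b) (r_nec p). Qed.

Lemma prov_unfold a : prov (Imp (Dia a) (Or a (Next (Dia a)))).
Proof.
have step : prov (Imp (Next (Or a (Next (Dia a)))) (Or a (Next (Dia a)))).
  apply: prov_of.
  refine (d_mp _ (d_mp (d_ax _ (ax_nextOr _ _)) (hypA _ _))).
  refine (d_mp (d_mp (d_ax _ (ax_orE _ _ _)) _) _).
  - apply: d_ax; apply: prov_of; apply: (d_mp (d_ax _ (ax_orI2 _ _))).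
    exact: d_mp (d_ax _ (nextmono (prov_dia a))) (hypA _ _).
  - apply: d_ax; apply: prov_of; apply: (d_mp (d_ax _ (ax_orI2 _ _))).
    exact: d_mp (d_ax _ (nextmono (prov_ndia a))) (hypA _ _).
have h1 := r_diaInd step.
have h2 := r_diaMono (ax_orI1 a (Next (Dia a))).
apply: prov_of; apply: (d_mp (d_ax _ h1)); exact: d_mp (d_ax _ h2) (hypA _ _).
Qed.

Lemma CF_wq : weak_quasimodel (fun _ => True) CF.
Proof.
split.
- split; first by move=> w a.
  split; first by move=> u v w h1 h2 a /h1 /h2.
  split; first by move=> u v h1 h2; apply: Pt_eq => a; split; [apply: h1|apply: h2].
  split.
  + move=> [g pg] /=; split=> //; split=> //; split; first by move=> a [].
    split; first by move=> a _; case: (classic (g a)); [right|left].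
    split; first exact: pr_bot.
    split; first by move=> a b _; apply: pr_and.
    split; first by move=> a b _; apply: pr_or.
    split.
    * move=> a b h; case: (classic (g a)) => ga; last by left.
      by right; exact (pr_mp pg h ga).
    * by move=> a nd ga; apply: nd; exact (pr_imp pg (prov_dia a) ga).
  split; first by move=> w v a h; apply: h.
  move=> [g pg] a b /= nimp.
  have nd : ~ Der (add g a) b.
    by move=> D; apply: nimp; apply: (pr_der pg); apply: deduction.
  have [pl sub nb] := lindenbaum nd.
  exists (exist _ _ pl) => /=; split => //; first by move=> x gx; apply: sub; left.
  by apply: sub; right.
- move=> [w pw] [w' pw'] [v pv] /= le1 hS.
  exists (exist _ (succ w') (succ_prime pw')) => /=; split => // a /hS /le1.
  by [].
- move=> [w pw] [v pv] /= hS; split.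
  + by move=> a /hS.
  + by move=> a nw vv; apply: nw; apply/hS.
  + move=> a hd na; apply/hS; have := pr_imp pw (prov_unfold a) hd.
    by case/(pr_or pw).
  + by move=> a nd /hS ns; apply: nd; exact (pr_imp pw (prov_ndia a) ns).
Qed.

Lemma CF_det : deterministic CF.
Proof.
move=> [w pw]; exists (exist _ (succ w) (succ_prime pw)); split => //= v hv.
by apply: Pt_eq => a /=; rewrite /succ hv.
Qed.

Lemma ext_imp (G : Pt) p q : ~ sval G (Imp p q) ->
  exists D : Pt, (forall a, sval G a -> sval D a) /\ sval D p /\ ~ sval D q.
Proof.
case: G => [g pg] /= nimp.
have nd : ~ Der (add g p) q.
  by move=> D; apply: nimp; apply: (pr_der pg); apply: deduction.
have [pl sub nb] := lindenbaum nd.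
exists (exist _ _ pl) => /=; split; first by move=> a ga; apply: sub; left.
by split => //; apply: sub; right.
Qed.

Lemma In_filter (A : Type) (p : pred A) s a :
  List.In a [seq x <- s | p x] <-> List.In a s /\ p a.
Proof.
elim: s => [|x s IH] /=; first by split=> [[]|[[]]].
case px: (p x) => /=; rewrite IH; split.
- by case=> [<-|[h1 h2]]; [split=> //; left|split=> //; right].
- by case=> [[<-|h1] h2]; [left|right].
- by case=> h1 h2; split=> //; right.
- by case=> [[<-|h1] h2]; [rewrite px in h2|].
Qed.

Lemma In_map (A B : Type) (f : A -> B) s y :
  List.In y (map f s) <-> exists x, List.In x s /\ y = f x.
Proof.
elim: s => [|x s IH] /=; first by split=> [[]|[x [[]]]].
rewrite IH; split.
- by case=> [<-|[z [h ->]]]; [exists x; split=> //; left|exists z; split=> //; right].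
- by case=> z [[<-|h] ->]; [left|right; exists z].
Qed.

Lemma In_mem (T : eqType) (s : seq T) x : List.In x s <-> x \in s.
Proof.
elim: s => [|y s IH] //=; rewrite in_cons IH; split.
- by case=> [->|->]; rewrite ?eqxx ?orbT.
- by case/orP => [/eqP ->|h]; [left|right].
Qed.

Lemma reach_snoc (T : Type) (P : T -> Prop) (R : T -> T -> Prop) w u u' :
  reachP P R w u -> R u u' -> P u' -> reachP P R w u'.
Proof.
elim=> [x px|x y z px rxy _ IH] ruu pu.
- exact: rp_step px ruu (rp_refl _ pu).
- exact: rp_step px rxy (IH ruu pu).
Qed.

Section SimSec.
Variables (Sig : seq form) (T : finType) (le S : rel T) (lpos : T -> pred form).
Hypothesis hWQ : weak_quasimodel (inSig Sig) (finframe Sig le S lpos).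

Lemma simB (E : T -> Pt -> Prop) : @simulation (finframe Sig le S lpos) CF E ->
  forall k w D, E w D -> ~ sval D (Sim_fuel Sig le lpos k w).
Proof.
move=> [fc lab]; elim=> [|k IH] w D ED /=; first exact: (pr_bot (svalP D)).
move=> hI; have [labn labp] := lab _ _ ED.
have pD := svalP D.
have hp : sval D (bigAnd [seq a <- Sig | lpos w a]).
  by apply/(pr_bigAnd pD) => x /In_filter [ix px]; apply: labp.
have := pr_mp pD hI hp; case/(pr_or pD).
- case/(pr_bigOr pD) => x [/In_filter [ix px] dx]; exact: (labn x (conj ix px) dx).
- case/(pr_bigOr pD) => y [/In_map [v [/In_filter [_ /andP [lev nev]] ->]] dy].
  have [D' [leD ED']] := fc w D v ED lev.
  exact: (IH v D' ED' (leD _ dy)).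
Qed.

Definition m x := #|[pred v | le x v && (v != x)]|.

Lemma m_lt x x' : le x x' -> x' != x -> m x' < m x.
Proof.
have [[_ [trans [anti _]]] _ _] := hWQ.
move=> lxx nx; apply: proper_card; apply/properP; split.
- apply/subsetP => v; rewrite !inE => /andP [h1 h2]; apply/andP; split.
  + exact: (trans x x' v lxx h1).
  + apply/eqP => evx; subst v; move/eqP: nx; apply; exact: (anti _ _ h1 lxx).
- by exists x'; rewrite !inE ?lxx ?nx ?eqxx ?andbF.
Qed.

Lemma m_T x : m x < #|T|.
Proof.
rewrite -(cardC [pred v | le x v && (v != x)]) /m -[X in X < _]addn0 ltn_add2l.
by apply/card_gt0P; exists x; rewrite !inE eqxx andbF.
Qed.

Definition Edef x (D : Pt) := exists k, m x <= k /\ sval D (bigAnd [seq a <- Sig | lpos x a]) /\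
  ~ sval D (Or (bigOr [seq a <- Sig | ~~ lpos x a])
               (bigOr [seq Sim_fuel Sig le lpos k v | v <- enum T & le x v && (v != x)])).

Lemma Esim : @simulation (finframe Sig le S lpos) CF Edef.
Proof.
split.
- move=> x D x' [k [hm [hp hn]]] lxx /=.
  have pD := svalP D.
  case: (eqVneq x' x) => [->|nx]; first by exists D; split => //; exists k.
  have lt := m_lt lxx nx.
  have nS : ~ sval D (Sim_fuel Sig le lpos k x').
    move=> hs; apply: hn; apply/(pr_or pD); right; apply/(pr_bigOr pD).
    exists (Sim_fuel Sig le lpos k x'); split => //; apply/In_map; exists x'; split => //.
    apply/In_filter; split; [apply/In_mem; exact: mem_enum | by rewrite lxx nx].
  case: k hm nS hn => [|k] hm nS hn.
    by have := leq_trans lt hm.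
  have [D' [sub [hp' hn']]] := ext_imp nS.
  exists D'; split => //; exists k; split => //.
  by rewrite -ltnS; apply: leq_trans lt hm.
- move=> x D [k [hm [hp hn]]]; have pD := svalP D; split.
  + move=> a [ia na] hd; apply: hn; apply/(pr_or pD); left; apply/(pr_bigOr pD).
    by exists a; split=> //; apply/In_filter.
  + move=> a [ia pa]; move/(pr_bigAnd pD): hp; apply; exact/In_filter.
Qed.

Lemma simA w (G : Pt) : ~ sval G (Sim Sig le lpos w) ->
  exists G' : Pt, (forall a, sval G a -> sval G' a) /\
    @simulates (finframe Sig le S lpos) CF w G'.
Proof.
rewrite /Sim; have := m_T w; case: #|T| => [|k] //= hm nS.
have [G' [sub [hp hn]]] := ext_imp nS.
by exists G'; split => //; exists Edef; split; [exact: Esim|exists k].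
Qed.
End SimSec.

Theorem lemma7p2 (Sig : seq form) (T : finType) (le S : rel T)
    (lpos : T -> pred form) :
  sub_closed Sig ->
  weak_quasimodel (inSig Sig) (finframe Sig le S lpos) ->
  (forall A : lframe,
     weak_quasimodel (fun _ => True) A -> deterministic A ->
     [/\ simulation (@simulates (finframe Sig le S lpos) A),
         dynamic (@simulates (finframe Sig le S lpos) A)
       & surjective (@simulates (finframe Sig le S lpos) A)]) ->
  forall w : T,
    ~ prov (Sim Sig le lpos w) ->
    forall l : seq T, uniq l ->
      (forall v, v \in l <->
         reachP (fun u => ~ prov (Sim Sig le lpos u)) (fun x y => S x y) w v) ->
      prov (Imp (Next (bigAnd [seq Sim Sig le lpos v | v <- l]))
                (bigAnd [seq Sim Sig le lpos v | v <- l])).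
Proof.
move=> _ hWQ hyp w hw l _ hl.
set phi := bigAnd [seq Sim Sig le lpos v | v <- l].
apply: NNPP => hnot.
have nd : ~ Der (add (fun _ => False) (Next phi)) phi.
  by move=> D; apply: hnot; apply: prov_of.
have [pH subH nH] := lindenbaum nd.
set G : Pt := exist _ _ pH.
have hN : sval G (Next phi) by apply: subH; right.
have [u [ul nu]] : exists u, u \in l /\ ~ sval G (Sim Sig le lpos u).
  apply: NNPP => hno; apply: nH; apply/(pr_bigAnd pH) => x /In_map [v [/In_mem vl ->]].
  apply: NNPP => nv; apply: hno; by exists v.
have [G' [leG simu]] := simA hWQ nu.
have pG' := svalP G'.
set D : Pt := exist _ (succ (sval G')) (succ_prime pG').
have [_ dyn _] := hyp CF CF_wq CF_det.
have [u' [Suu simu']] := dyn u G' D simu (fun a => iff_refl _).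
have [E [hE Eu']] := simu'.
have nS := simB hE Eu'.
have pu' : ~ prov (Sim Sig le lpos u').
  by move=> p; apply: (nS #|T|); apply: (pr_ax (svalP D)).
have ul' : u' \in l.
  by apply/(hl u'); exact: (reach_snoc (proj1 (hl u) ul) Suu pu').
apply: (nS #|T|).
have hphi : sval D phi by rewrite /D /= /succ; apply: leG.
move/(pr_bigAnd (svalP D)): hphi; apply; apply/In_map; exists u'; split => //.
exact/In_mem.
Qed.
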